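(* The class $\mathbf{RMM}$ is not closed under homomorphisms: there exist a finite alphabet $\Sigma$, a language $L\in\mathbf{RMM}$ over $\Sigma$, and a monoid homomorphism $h:\Sigma^*\to\Sigma^*$ such that $h(L)\notin\mathbf{RMM}$.
   Context: A measure-many quantum finite automaton (MM-QFA) over a finite alphabet $\Sigma$ is a tuple $M=(Q,\Sigma,\{U_\sigma\}_{\sigma\in\Sigma\cup\{\$\}},q_0,Q_{acc},Q_{rej})$, where $Q$ is a finite set of states indexing an orthonormal basis of $\mathbb{C}^Q$, $\$\notin\Sigma$ is an end-marker, each $U_\sigma$ is unitary, $q_0$ is the initial state, and $Q$ is partitioned into $Q_{acc}$, $Q_{rej}$ and non-halting states $Q_{non}$, with orthogonal projections $P_{acc},P_{rej},P_{non}$ onto the corresponding spans. On input $x\in\Sigma^*$ it processes the symbols of $x\$$, maintaining $(\psi,p_{acc},p_{rej})$ initialised to $(|q_0\rangle,0,0)$: on reading $\sigma$, $\psi'=U_\sigma\psi$, $p_{acc}\mathrel{+}=\|P_{acc}\psi'\|^2$, $p_{rej}\mathrel{+}=\|P_{rej}\psi'\|^2$, $\psi\leftarrow P_{non}\psi'$. The acceptance probability $p_M(x)$ is the final $p_{acc}$. $M$ accepts $L$ with bounded error if for some $\lambda$ and $\epsilon>0$, $p_M(x)>\lambda+\epsilon$ for $x\in L$ and $p_M(x)<\lambda-\epsilon$ for $x\notin L$. $\mathbf{RMM}$ is the class of languages accepted by some MM-QFA with bounded error. *)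

(* Defs.v *)
From HB Require Import structures.
From mathcomp Require Import all_boot all_order all_algebra.
From mathcomp Require Import complex.
From mathcomp Require Import Rstruct.
From Stdlib Require Import Rdefinitions.
Set Implicit Arguments. Unset Printing Implicit Defensive.
Import Order.TTheory GRing.Theory Num.Theory.
Local Open Scope ring_scope.

Notation RR := Rdefinitions.R.
Notation CC := (complex Rdefinitions.R).

Inductive qkind := Qacc | Qrej | Qnon.
Definition qkind_eqb (a b : qkind) : bool :=
  match a, b with
  | Qacc, Qacc | Qrej, Qrej | Qnon, Qnon => true | _, _ => false end.

(* A measure-many QFA over alphabet S with state set 'I_n.
   Input symbols are [option S]: [Some s] is the letter s, [None] is the
   end-marker $. *)
Record mmqfa (S : finType) := MMQFA {
  mm_n : nat;
  mm_U : option S -> 'M[CC]_mm_n;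
  mm_q0 : 'I_mm_n;
  mm_kind : 'I_mm_n -> qkind }.

Definition adjmx n (A : 'M[CC]_n) : 'M[CC]_n := (map_mx (@conjc _) A)^T.
Definition unitary_mx n (A : 'M[CC]_n) : Prop := A *m adjmx A = 1%:M.

Definition mm_wf (S : finType) (M : mmqfa S) : Prop :=
  forall s : option S, unitary_mx (@mm_U S M s).

Definition proj_kind (S : finType) (M : mmqfa S) (k : qkind)
  (v : 'cV[CC]_(mm_n M)) : 'cV[CC]_(mm_n M) :=
  \col_i (if qkind_eqb (@mm_kind S M i) k then v i 0 else 0).

Definition normsq n (v : 'cV[CC]_n) : RR :=
  \sum_i ((@complex.Re RR (v i 0)) ^+ 2 + (@complex.Im RR (v i 0)) ^+ 2).

Definition mm_step (S : finType) (M : mmqfa S)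
  (st : 'cV[CC]_(mm_n M) * RR * RR) (s : option S) :=
  let: (psi, pacc, prej) := st in
  let psi' := @mm_U S M s *m psi in
  (proj_kind M Qnon psi', pacc + normsq (proj_kind M Qacc psi'),
   prej + normsq (proj_kind M Qrej psi')).

Definition init_vec n (q : 'I_n) : 'cV[CC]_n := \col_i (if i == q then 1 else 0).

Definition accept_prob (S : finType) (M : mmqfa S) (x : seq S) : RR :=
  (foldl (@mm_step S M) (init_vec (@mm_q0 S M), 0, 0)
     (rcons (map Some x) None)).1.2.

Definition language (S : finType) := seq S -> Prop.

Definition accepts_bounded (S : finType) (M : mmqfa S) (L : language S) : Prop :=
  exists (lam eps : RR), 0 < eps /\
    forall x : seq S,
      (L x -> lam + eps < accept_prob M x) /\
      (~ L x -> accept_prob M x < lam - eps).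

Definition RMM (S : finType) (L : language S) : Prop :=
  exists M : mmqfa S, mm_wf M /\ accepts_bounded M L.

Definition monoid_hom (S : finType) (h : seq S -> seq S) : Prop :=
  h [::] = [::] /\ forall u v, h (u ++ v) = h u ++ h v.

Definition lang_image (S : finType) (h : seq S -> seq S) (L : language S)
  : language S := fun y => exists2 x, L x & y = h x.

(* Main.v *)
Require Import Defs.
From HB Require Import structures.
From mathcomp Require Import all_boot all_order all_fingroup all_algebra complex Rstruct.
From mathcomp.algebra_tactics Require Import ring lra.
Set Implicit Arguments. Unset Strict Implicit. Unset Printing Implicit Defensive.
Import Order.TTheory GRing.Theory Num.Theory.
Local Open Scope ring_scope.

Local Notation RE := (@complex.Re RR).
Local Notation IM := (@complex.Im RR).

Section Norms.
Variable n : nat.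
Implicit Types u v x y : 'cV[CC]_n.

Lemma normsq_ge0 v : 0 <= normsq v.
Proof. apply: sumr_ge0 => i _; apply: addr_ge0; exact: sqr_ge0. Qed.

Lemma ReD (z w : CC) : RE (z + w) = RE z + RE w.
Proof. by case: z => a b; case: w => c d; rewrite [in LHS]/GRing.add /=. Qed.
Lemma ImD (z w : CC) : IM (z + w) = IM z + IM w.
Proof. by case: z => a b; case: w => c d; rewrite [in LHS]/GRing.add /=. Qed.
Lemma ReN (z : CC) : RE (- z) = - RE z.
Proof. by case: z => a b; rewrite [in LHS]/GRing.opp /=. Qed.
Lemma ImN (z : CC) : IM (- z) = - IM z.
Proof. by case: z => a b; rewrite [in LHS]/GRing.opp /=. Qed.

Lemma sq_le (t a c : RR) : 0 < t ->
  (a + c) ^+ 2 <= (1 + t) * a ^+ 2 + (1 + t^-1) * c ^+ 2.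
Proof.
move=> t0.
have ti : t * t^-1 = 1 by rewrite mulfV // gt_eqF.
have tip : 0 < t^-1 by rewrite invr_gt0.
have h : 0 <= (t * a - c) ^+ 2 * t^-1 by apply: mulr_ge0 => //; [exact: sqr_ge0|exact: ltW].
set s := t^-1 in ti tip h *.
have e : (t * a - c) ^+ 2 * s = t * (t * s) * a ^+ 2 - 2 * (t * s) * a * c + s * c ^+ 2 by ring.
rewrite e ti in h.
have e2 : (a + c) ^+ 2 = a ^+ 2 + 2 * a * c + c ^+ 2 by ring.
rewrite e2; lra.
Qed.

Lemma normsqD_le t x y : 0 < t ->
  normsq (x + y) <= (1 + t) * normsq x + (1 + t^-1) * normsq y.
Proof.
move=> t0; rewrite /normsq !mulr_sumr -big_split /=.
apply: ler_sum => i _; rewrite !mxE ReD ImD.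
have h1 := sq_le (RE (x i 0)) (RE (y i 0)) t0.
have h2 := sq_le (IM (x i 0)) (IM (y i 0)) t0.
lra.
Qed.

Lemma normsqN x : normsq (- x) = normsq x.
Proof. by apply: eq_bigr => i _; rewrite !mxE ReN ImN !sqrrN. Qed.

Lemma normsqB_sym x y : normsq (x - y) = normsq (y - x).
Proof. by rewrite -normsqN opprB. Qed.

Lemma normsq_cnorm v :
  normsq v = RE (((map_mx (@conjc _) v)^T *m v) 0 0).
Proof.
rewrite mxE /normsq.
elim/big_rec2: _ => [|i r1 r2 _ ->]; first by [].
rewrite !mxE ReD; congr (_ + _).
case: (v i 0) => a b; rewrite /GRing.mul /=; ring.
Qed.

End Norms.
Section QFA.
Variable S : finType.
Variable M : mmqfa S.
Hypothesis wf : mm_wf M.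
Local Notation N := (mm_n M).
Local Notation P := (proj_kind M).
Implicit Types u v x y : 'cV[CC]_N.

Lemma RE0 : RE 0 = 0. Proof. by []. Qed.
Lemma IM0 : IM 0 = 0. Proof. by []. Qed.

Lemma proj_add k x y : P k (x + y) = P k x + P k y.
Proof. by apply/matrixP => i j; rewrite !mxE; case: ifP => _; rewrite ?addr0. Qed.
Lemma proj_opp k x : P k (- x) = - P k x.
Proof. by apply/matrixP => i j; rewrite !mxE; case: ifP => _; rewrite ?oppr0. Qed.
Lemma proj_sub k x y : P k (x - y) = P k x - P k y.
Proof. by rewrite proj_add proj_opp. Qed.

Lemma normsq_proj_le k x : normsq (P k x) <= normsq x.
Proof.
apply: ler_sum => i _; rewrite !mxE; case: ifP => _ //.
rewrite [RE 0]/= [IM 0]/= expr0n /= addr0; apply: addr_ge0; exact: sqr_ge0.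
Qed.

Lemma normsq_split3 v :
  normsq v = normsq (P Qnon v) + normsq (P Qacc v) + normsq (P Qrej v).
Proof.
rewrite /normsq -!big_split; apply: eq_bigr => i _; rewrite !mxE.
by case: (mm_kind M i); rewrite /= ?[RE 0]/= ?[IM 0]/= ?expr0n /= ?addr0 ?add0r.
Qed.

Lemma normsq_nonsplit v : normsq v = normsq (P Qnon v) + normsq (v - P Qnon v).
Proof.
rewrite /normsq -!big_split; apply: eq_bigr => i _; rewrite !mxE.
by case: (mm_kind M i); rewrite /= ?subr0 ?subrr ?[RE 0]/= ?[IM 0]/= ?expr0n /= ?addr0 ?add0r.
Qed.

Lemma unit_norm s v : normsq (mm_U M s *m v) = normsq v.
Proof.
rewrite !normsq_cnorm map_mxM trmx_mul.
have h : adjmx (mm_U M s) *m mm_U M s = 1%:M by apply: mulmx1C; exact: wf.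
by rewrite -mulmxA [X in _ *m X]mulmxA -/(adjmx _) h mul1mx.
Qed.

End QFA.
Section Runs.
Variable S : finType.
Variable M : mmqfa S.
Hypothesis wf : mm_wf M.
Local Notation N := (mm_n M).
Local Notation P := (proj_kind M).

Definition st (x : seq S) :=
  foldl (mm_step M) (init_vec (mm_q0 M), 0, 0) (map Some x).

Lemma acceptE x : accept_prob M x =
  (st x).1.2 + normsq (P Qacc (mm_U M None *m (st x).1.1)).
Proof. by rewrite /accept_prob foldl_rcons -/(st x); case: (st x) => [[psi pa] pr]. Qed.

Lemma st_cat x y : st (x ++ y) = foldl (mm_step M) (st x) (map Some y).
Proof. by rewrite /st map_cat foldl_cat. Qed.

Lemma st_rcons x s : st (rcons x s) = mm_step M (st x) (Some s).
Proof. by rewrite -cats1 st_cat. Qed.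

Definition Phi (t : 'cV[CC]_N * RR * RR) := t.1.2 + t.2 + normsq t.1.1.

Lemma step_cons t s : Phi (mm_step M t s) = Phi t /\ t.2 <= (mm_step M t s).2
  /\ t.1.2 <= (mm_step M t s).1.2.
Proof.
case: t => [[psi pa] pr] /=; rewrite /Phi /=.
have h := normsq_split3 (mm_U M s *m psi); rewrite (unit_norm wf) in h.
split; first by rewrite h; lra.
have h1 := normsq_ge0 (P Qacc (mm_U M s *m psi)).
have h2 := normsq_ge0 (P Qrej (mm_U M s *m psi)).
split; lra.
Qed.

Lemma fold_cons t l : Phi (foldl (mm_step M) t l) = Phi t /\ t.2 <= (foldl (mm_step M) t l).2
  /\ t.1.2 <= (foldl (mm_step M) t l).1.2.
Proof.
elim: l t => [|s l IH] t /=; first by split; [|split].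
have [h1 [h2 h3]] := step_cons t s.
have [g1 [g2 g3]] := IH (mm_step M t s).
split; first by rewrite g1.
split; [exact: le_trans h2 g2 | exact: le_trans h3 g3].
Qed.

Lemma normsq_init : normsq (init_vec (mm_q0 M)) = 1.
Proof.
rewrite /normsq (bigD1 (mm_q0 M)) //= big1 => [|i ne].
  by rewrite !mxE eqxx [RE 1]/= [IM 1]/= expr1n expr0n /= !addr0.
by rewrite !mxE (negbTE ne) [RE 0]/= [IM 0]/= expr0n /= addr0.
Qed.

Lemma Phi_st x : Phi (st x) = 1.
Proof.
have [h _] := fold_cons (init_vec (mm_q0 M), 0, 0) (map Some x).
by rewrite /st h /Phi /= normsq_init !add0r.
Qed.

Lemma acc_ge0 x : 0 <= (st x).1.2.
Proof. by have [_ [_ h]] := fold_cons (init_vec (mm_q0 M), 0, 0) (map Some x). Qed.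
Lemma rej_ge0 x : 0 <= (st x).2.
Proof. by have [_ [h _]] := fold_cons (init_vec (mm_q0 M), 0, 0) (map Some x). Qed.

Lemma psi_le1 x : normsq (st x).1.1 <= 1.
Proof. have := Phi_st x; rewrite /Phi; have := acc_ge0 x; have := rej_ge0 x; lra. Qed.

Lemma ext x y : (st x).1.2 <= (st (x ++ y)).1.2 /\
  (st (x ++ y)).1.2 - (st x).1.2 <= normsq (st x).1.1 - normsq (st (x ++ y)).1.1 /\
  normsq (st (x ++ y)).1.1 <= normsq (st x).1.1.
Proof.
have [h1 [h2 h3]] := fold_cons (st x) (map Some y).
rewrite -st_cat in h1 h2 h3; move: h1; rewrite /Phi => h1.
have := acc_ge0 x; have := rej_ge0 x.
split; first by [].
split; lra.
Qed.

End Runs.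
Section Pigeon.

Lemma coord_le n (v : 'cV[CC]_n) i : RE (v i 0) ^+ 2 + IM (v i 0) ^+ 2 <= normsq v.
Proof.
rewrite /normsq (bigD1 i) //= lerDl; apply: sumr_ge0 => j _.
apply: addr_ge0; exact: sqr_ge0.
Qed.

Lemma coord_close (m : nat) (r r' : RR) : (0 < m)%N -> r ^+ 2 <= 1 -> r' ^+ 2 <= 1 ->
  Num.truncn ((r + 1) * m%:R) = Num.truncn ((r' + 1) * m%:R) ->
  (r - r') ^+ 2 * m%:R <= 1.
Proof.
move=> m0 hr hr' e.
have m1 : 1 <= (m%:R : RR) by rewrite ler1n.
have r1 : -1 <= r <= 1 by apply/andP; split; nra.
have r1' : -1 <= r' <= 1 by apply/andP; split; nra.
have x0 : 0 <= (r + 1) * m%:R by apply: mulr_ge0; lra.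
have y0 : 0 <= (r' + 1) * m%:R by apply: mulr_ge0; lra.
have := truncn_itv x0; have := truncn_itv y0; rewrite e.
set k := Num.truncn _; rewrite -natr1 => /andP [a1 a2] /andP [b1 b2].
have hz : ((r - r') * m%:R) ^+ 2 < 1 by nra.
nra.
Qed.

Lemma pigeon n (eta : RR) : 0 < eta -> exists K : nat,
  forall f : nat -> 'cV[CC]_n, (forall t, normsq (f t) <= 1) ->
  exists i j, (i < j <= K)%N /\ normsq (f i - f j) < eta.
Proof.
move=> eta0.
pose m := (Num.truncn (2 * n%:R / eta)).+1.
have m0 : (0 < m)%N by [].
have m0r : 0 <= (m%:R : RR) by rewrite ler0n.
have mgt : 2 * n%:R / eta < (m%:R : RR) by exact: truncnS_gt.
pose co (v : 'cV[CC]_n) (p : 'I_n * bool) : RR :=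
  if p.2 then RE (v p.1 0) else IM (v p.1 0).
pose cell (v : 'cV[CC]_n) : {ffun 'I_n * bool -> 'I_(2 * m).+1} :=
  [ffun p => inord (Num.truncn ((co v p + 1) * m%:R))].
exists ((2 * m).+1 ^ (n * 2))%N => f f1.
pose g (i : 'I_((2 * m).+1 ^ (n * 2)).+1) := cell (f i).
have [i [j [ne eq]]] : exists i j, i != j /\ g i = g j.
  apply: Classical_Prop.NNPP => H.
  have inj : injective g.
    move=> i j e; apply/eqP; apply/negPn/negP => ne; apply: H; exists i, j; done.
  have := leq_card _ inj.
  by rewrite card_ffun card_prod !card_ord card_bool ltnn.
have co_sq (v : 'cV[CC]_n) p : normsq v <= 1 -> co v p ^+ 2 <= 1.
  move=> h; have := coord_le v p.1; rewrite /co.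
  have := sqr_ge0 (RE (v p.1 0)); have := sqr_ge0 (IM (v p.1 0)).
  case: p.2; lra.
have co_le (v : 'cV[CC]_n) p : normsq v <= 1 -> (Num.truncn ((co v p + 1) * m%:R) < (2 * m).+1)%N.
  move=> h; have := co_sq v p h => hs.
  have r1 : co v p <= 1 by nra.
  have r0 : -1 <= co v p by nra.
  have x0 : 0 <= (co v p + 1) * m%:R by apply: mulr_ge0; lra.
  rewrite truncn_lt_nat // -natr1 natrM.
  have : (co v p + 1) * m%:R <= 2 * m%:R by apply: ler_wpM2r => //; lra.
  lra.
have key (a b : nat) : cell (f a) = cell (f b) -> normsq (f a - f b) < eta.
  move=> e.
  have cp p : (co (f a) p - co (f b) p) ^+ 2 * m%:R <= 1.
    apply: coord_close => //; try exact: co_sq.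
    have := congr1 (fun F : {ffun 'I_n * bool -> 'I_(2 * m).+1} => val (F p)) e; rewrite /cell !ffunE /= !inordK //; exact: co_le.
  have hsum : normsq (f a - f b) * m%:R <= n%:R * 2.
    have -> : n%:R * 2 = \sum_(k < n) (2 : RR) by rewrite sumr_const card_ord mulr_natl.
    rewrite /normsq mulr_suml.
    apply: ler_sum => k _; rewrite !mxE ReD ImD ReN ImN mulrDl.
    have := cp (k, true); have := cp (k, false); rewrite /co /=.
    lra.
  have hm : 0 < (m%:R : RR) by rewrite ltr0n.
  have : n%:R * 2 < eta * m%:R.
    have := mgt; rewrite ltr_pdivrMr // => h; lra.
  move=> h2.
  have : normsq (f a - f b) * m%:R < eta * m%:R by lra.
  by rewrite ltr_pM2r.
have iK := ltn_ord i; have jK := ltn_ord j.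
case: (ltngtP i j) => [lt|gt|eij].
- exists i, j; split; first by rewrite lt /= -ltnS.
  exact: key.
- exists j, i; split; first by rewrite gt /= -ltnS.
  exact: key.
- by move: ne; rewrite (val_inj eij) eqxx.
Qed.

End Pigeon.
Lemma normsq0 n : normsq (0 : 'cV[CC]_n) = 0.
Proof. by apply: big1 => i _; rewrite mxE [RE 0]/= [IM 0]/= expr0n /= addr0. Qed.

Lemma iter_lin n (U : 'M[CC]_n) k (x y : 'cV[CC]_n) :
  iter k (mulmx U) (x - y) = iter k (mulmx U) x - iter k (mulmx U) y.
Proof. by elim: k => //= k ->; rewrite mulmxBr. Qed.

Lemma nseqS_rcons (T : Type) (t : nat) (b : T) : nseq t.+1 b = rcons (nseq t b) b.
Proof. by elim: t => //= t <-. Qed.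

Section Main.
Variable S : finType.
Variable M : mmqfa S.
Hypothesis wf : mm_wf M.
Local Notation N := (mm_n M).
Local Notation P := (proj_kind M).
Local Notation psi x := (st M x).1.1.
Local Notation acc x := (st M x).1.2.

Lemma iter_norm s k v : normsq (iter k (mulmx (mm_U M s)) v) = normsq v.
Proof. by elim: k => //= k <-; rewrite (unit_norm wf). Qed.

Lemma psi_rcons x s : psi (rcons x s) = P Qnon (mm_U M (Some s) *m psi x).
Proof. by rewrite st_rcons; case: (st M x) => [[]]. Qed.

Variables a b : S.
Local Notation W := (fun w : seq S => all (fun s => s \in [:: a; b]) w).

Lemma descent (del : RR) : 0 < del -> exists w, W w /\
  forall y, W y -> normsq (psi w) - del <= normsq (psi (w ++ y)).
Proof.
move=> d0; apply: Classical_Prop.NNPP => H.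
have step : forall w, W w -> exists y, W y /\ normsq (psi (w ++ y)) < normsq (psi w) - del.
  move=> w Ww; apply: Classical_Prop.NNPP => H2; apply: H; exists w; split => // y Wy.
  rewrite leNgt; apply/negP => lt; apply: H2; exists y; split => //.
have ind : forall k : nat, exists w, W w /\ normsq (psi w) <= 1 - k%:R * del.
  elim => [|k [w [Ww hw]]].
    by exists [::]; split => //; rewrite /st /= normsq_init mul0r subr0.
  have [y [Wy hy]] := step w Ww.
  exists (w ++ y); split; first by rewrite all_cat Ww Wy.
  rewrite -natr1 mulrDl mul1r; lra.
have [w [_ hw]] := ind (Num.truncn del^-1).+1.
have := truncnS_gt del^-1; set k := _%:R => hk.
have : del^-1 * del = 1 by rewrite mulVf // gt_eqF.
have := normsq_ge0 (psi w).
nra.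
Qed.

Lemma gdiff (t : RR) p q : 0 < t -> normsq q <= 1 ->
  normsq (P Qacc (mm_U M None *m p)) <= normsq (P Qacc (mm_U M None *m q)) + t
     + (1 + t^-1) * normsq (p - q).
Proof.
move=> t0 q1.
rewrite {1}(_ : p = q + (p - q)); last by rewrite addrC subrK.
rewrite mulmxDr proj_add.
have h := normsqD_le (P Qacc (mm_U M None *m q)) (P Qacc (mm_U M None *m (p - q))) t0.
have h1 := normsq_proj_le Qacc (mm_U M None *m (p - q)); rewrite (unit_norm wf) in h1.
have h2 := normsq_proj_le Qacc (mm_U M None *m q); rewrite (unit_norm wf) in h2.
have c0 : 0 <= 1 + t^-1 by rewrite addr_ge0 // invr_ge0 ltW.
have h3 : (1 + t^-1) * normsq (P Qacc (mm_U M None *m (p - q))) <= (1 + t^-1) * normsq (p - q).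
  exact: ler_wpM2l.
have h4 : t * normsq (P Qacc (mm_U M None *m q)) <= t * 1.
  apply: ler_wpM2l; [exact: ltW | lra].
rewrite mulrDl mul1r in h; lra.
Qed.

Lemma not_bounded (L' : language S) :
  (forall w, W w -> L' (rcons w a)) ->
  (forall w d, W w -> (0 < d)%N -> ~ L' (w ++ a :: nseq d b)) ->
  ~ accepts_bounded M L'.
Proof.
move=> Lin Lout [lam [eps [eps0 H]]].
pose t := eps / 2.
have t0 : 0 < t by rewrite divr_gt0.
pose c := 1 + t^-1.
have c0 : 0 < c by rewrite ltr_wpDr // invr_ge0 ltW.
pose eta := eps / (4 * c).
have eta0 : 0 < eta by rewrite divr_gt0 // mulr_gt0.
have [K HK] := pigeon N eta0.
pose Q : RR := 4 ^+ K.
have Q1 : 1 <= Q by apply: exprn_ege1; rewrite ler1n.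
pose del := eps / (2 * (1 + 2 * c * Q)).
have dpos : 0 < 1 + 2 * c * Q by apply: ltr_wpDr => //; apply: mulr_ge0; [apply: mulr_ge0|]; lra.
have del0 : 0 < del by rewrite divr_gt0 // mulr_gt0.
have edel : del * (1 + 2 * c * Q) = eps / 2.
  by rewrite /del; field; rewrite gt_eqF.
have eeta : 2 * c * eta = eps / 2.
  by rewrite /eta; field; rewrite gt_eqF.
have [w [Ww Hw]] := descent del0.
pose x (k : nat) := w ++ a :: nseq k b.
have Wx k : W (a :: nseq k b).
  rewrite /= inE eqxx /=; elim: k => //= k ->; by rewrite !inE eqxx orbT.
have xS k : x k.+1 = rcons (x k) b by rewrite /x nseqS_rcons -rcons_cons rcons_cat.
have nlo k : normsq (psi w) - del <= normsq (psi (x k)) by apply: Hw.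
have nhi' k : normsq (psi (x k)) <= normsq (psi w).
  by have [_ [_ h]] := ext wf w (a :: nseq k b).
have acc_lo k : acc w <= acc (x k) by have [h _] := ext wf w (a :: nseq k b).
have acc_hi k : acc (x k) <= acc w + del.
  have [_ [h _]] := ext wf w (a :: nseq k b).
  have := nlo k; rewrite -/(x k) in h *; lra.
pose Ub := mm_U M (Some b).
pose u := psi (x 0).
pose Ut k := iter k (mulmx Ub) u.
have u1 : normsq u <= 1 by apply: psi_le1.
have [i [j [/andP [ij jK] hij]]] := HK Ut (fun k => ltac:(rewrite /Ut iter_norm; exact: u1)).
pose d := (j - i)%N.
have d0 : (0 < d)%N by rewrite subn_gt0.
have dK : (d <= K)%N by rewrite (leq_trans (leq_subr _ _)).
have hd : normsq (u - Ut d) < eta.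
  have : Ut j = iter i (mulmx Ub) (Ut d) by rewrite /Ut -iterD subnKC // ltnW.
  move=> e; rewrite e /Ut -iter_lin iter_norm in hij; exact: hij.
have halt k : normsq (Ub *m psi (x k) - psi (x k.+1)) <= del.
  rewrite xS psi_rcons -/Ub.
  have h := normsq_nonsplit (Ub *m psi (x k)); rewrite (unit_norm wf) in h.
  have := nlo k.+1; rewrite xS psi_rcons -/Ub => h2.
  have := nhi' k; lra.
have Dk k : normsq (psi (x k) - Ut k) <= 4 ^+ k * del.
  elim: k => [|k IH].
    by rewrite subrr normsq0 expr0 mul1r ltW.
  have -> : psi (x k.+1) - Ut k.+1 = - (Ub *m psi (x k) - psi (x k.+1)) + Ub *m (psi (x k) - Ut k).
    by rewrite /Ut iterS mulmxBr opprB addrA subrK.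
  have h := normsqD_le (- (Ub *m psi (x k) - psi (x k.+1))) (Ub *m (psi (x k) - Ut k)) ltr01.
  rewrite normsqN (unit_norm wf) invr1 in h.
  have := halt k; have := exprn_ege1 k (ler_nat RR 1 4).
  rewrite exprS; nra.
have hQ : 4 ^+ d <= Q :> RR by rewrite /Q ler_eXn2l ?ltr1n.
have he : normsq (psi (x d) - u) <= 2 * Q * del + 2 * eta.
  have -> : psi (x d) - u = (psi (x d) - Ut d) + (Ut d - u) by rewrite addrA subrK.
  have h := normsqD_le (psi (x d) - Ut d) (Ut d - u) ltr01.
  rewrite invr1 (normsqB_sym (Ut d)) in h.
  have := Dk d; have := hd.
  have : 4 ^+ d * del <= Q * del by rewrite ler_wpM2r // ltW.
  lra.
have hg := gdiff (psi (x 0)) t0 (psi_le1 wf (x d)).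
rewrite normsqB_sym -/u -/c in hg.
have hc : c * normsq (psi (x d) - u) <= c * (2 * Q * del + 2 * eta) by apply: ler_wpM2l => //; exact: ltW.
have [H1 _] := H (x 0).
have [_ H2] := H (x d).
have p1 := H1 (ltac:(rewrite /x cats1; exact: Lin)).
have p2 := H2 (Lout w d Ww d0).
rewrite !acceptE in p1 p2.
have := acc_lo 0; have := acc_hi 0; have := acc_lo d; have := acc_hi d.
have e3 : c * (2 * Q * del + 2 * eta) = 2 * c * Q * del + 2 * c * eta by ring.
rewrite /t in hg.
have e4 : del * (1 + 2 * c * Q) = del + 2 * c * Q * del by ring.
nra.
Qed.

End Main.
Section Concrete.

Lemma normsq_e n (q : 'I_n) : normsq (init_vec q) = 1.
Proof.
rewrite /normsq (bigD1 q) //= big1 => [|i ne].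
  by rewrite !mxE eqxx [RE 1]/= [IM 1]/= expr1n expr0n /= !addr0.
by rewrite !mxE (negbTE ne) [RE 0]/= [IM 0]/= expr0n /= addr0.
Qed.

Lemma perm_unitary n (s : {perm 'I_n}) : unitary_mx (perm_mx s : 'M[CC]_n).
Proof.
rewrite /unitary_mx /adjmx (map_perm_mx (@conjc RR)) tr_perm_mx -perm_mxM.
by rewrite mulgV perm_mx1.
Qed.

Lemma perm_e n (s : {perm 'I_n}) (q : 'I_n) :
  (perm_mx s : 'M[CC]_n) *m init_vec q = init_vec ((s^-1)%g q).
Proof.
rewrite -row_permE; apply/matrixP => i j; rewrite !mxE.
have -> : (s i == q) = (i == (s^-1)%g q).
  apply/eqP/eqP => [<-|->]; [by rewrite permK | by rewrite permKV].
by [].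
Qed.

Definition S3 := option bool.
Definition o0 : 'I_4 := @Ordinal 4 0 isT.
Definition o1 : 'I_4 := @Ordinal 4 1 isT.
Definition o2 : 'I_4 := @Ordinal 4 2 isT.
Definition o3 : 'I_4 := @Ordinal 4 3 isT.
Definition kind3 (i : 'I_4) : qkind :=
  match val i with 2 => Qacc | 3 => Qrej | _ => Qnon end.
Definition pab : {perm 'I_4} := tperm o1 o3.
Definition pcy : {perm 'I_4} := ((tperm o0 o1 * tperm o0 o3)^-1)%g.
Definition pend : {perm 'I_4} := (tperm o0 o3 * tperm o1 o2)%g.
Definition perm_of (s : option S3) : {perm 'I_4} :=
  match s with Some (Some _) => pab | Some None => pcy | None => pend end.
Definition M3 : mmqfa S3 :=
  @MMQFA _ 4 (fun s => perm_mx (perm_of s)) o0 kind3.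

End Concrete.
Lemma v1 : (pab^-1)%g o0 = o0.
Proof. by rewrite /pab tpermV tpermD. Qed.
Lemma v2 : (pab^-1)%g o1 = o3.
Proof. by rewrite /pab tpermV tpermL. Qed.
Lemma v3 : (pcy^-1)%g o0 = o1.
Proof. by rewrite /pcy invgK permM tpermL tpermD. Qed.
Lemma v4 : (pcy^-1)%g o1 = o3.
Proof. by rewrite /pcy invgK permM tpermR tpermL. Qed.
Lemma v5 : (pend^-1)%g o0 = o3.
Proof. by rewrite /pend invMg permM !tpermV (@tpermD _ o1 o2 o0) // tpermL. Qed.
Lemma v6 : (pend^-1)%g o1 = o2.
Proof. by rewrite /pend invMg permM !tpermV tpermL tpermD. Qed.
Section Sim.

Definition dfa (k : nat) (s : S3) : nat :=
  match k, s with 0%N, Some _ => 0%N | 0%N, None => 1%N | _, _ => 2%N end.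
Definition run (x : seq S3) := foldl dfa 0%N x.
Definition stv (k : nat) : 'cV[CC]_(mm_n M3) * RR * RR :=
  match k with 0%N => (init_vec o0, 0, 0) | 1%N => (init_vec o1, 0, 0) | _ => (0, 0, 1) end.

Lemma proj_e (k : qkind) (q : 'I_(mm_n M3)) :
  proj_kind M3 k (init_vec q) = if qkind_eqb (kind3 q) k then init_vec q else 0.
Proof.
apply/matrixP => i j; rewrite !mxE.
case: (eqVneq i q) => [->|ne] /=; first by case: ifP => _; rewrite !mxE ?eqxx.
by case: ifP => _; case: ifP => _; rewrite !mxE ?(negbTE ne).
Qed.

Lemma proj_0 (k : qkind) : proj_kind M3 k 0 = 0.
Proof. by apply/matrixP => i j; rewrite !mxE; case: ifP. Qed.

Lemma step_e (q : 'I_(mm_n M3)) s (pa pr : RR) : mm_step M3 (init_vec q, pa, pr) s =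
  let q' := ((perm_of s)^-1)%g q in
  match kind3 q' with
  | Qnon => (init_vec q', pa, pr)
  | Qacc => (0, pa + 1, pr)
  | Qrej => (0, pa, pr + 1) end.
Proof.
rewrite /mm_step /= perm_e !proj_e /=.
by case: (kind3 _) => /=; rewrite ?normsq_e ?normsq0 ?addr0.
Qed.

Lemma step_0 s (pa pr : RR) : mm_step M3 (0, pa, pr) s = (0, pa, pr).
Proof. by rewrite /mm_step /= mulmx0 !proj_0 normsq0 !addr0. Qed.

Lemma st3 x : st M3 x = stv (run x).
Proof.
elim/last_ind: x => [|x s IH]; first by [].
rewrite st_rcons IH /run foldl_rcons -/(run x).
case: (run x) => [|[|k]]; rewrite [stv _]/=.
- by rewrite step_e; case: s => [[]|] /=; rewrite ?v1 ?v3.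
- by rewrite step_e; case: s => [[]|] /=; rewrite ?v2 ?v4 /= add0r.
- by rewrite step_0; case: k => [|k]; case: s => [[]|].
Qed.

Lemma acc3 x : accept_prob M3 x = if run x == 1%N then 1 else 0.
Proof.
rewrite /accept_prob foldl_rcons -/(st M3 x) st3.
case: (run x) => [|[|k]]; rewrite [stv _]/=.
- by rewrite step_e /= v5.
- by rewrite step_e /= v6 /= add0r.
- by rewrite step_0.
Qed.

End Sim.
Definition L3 : language S3 := fun x => run x = 1%N.
Definition h3 (x : seq S3) : seq S3 :=
  map (fun s => if s is None then Some true else s) x.

Lemma runW (w : seq S3) : all (fun s => s \in [:: Some true; Some false]) w -> run w = 0%N.
Proof.
rewrite /run; elim: w => //= s w IH /andP [hs hw].
by move: hs; rewrite !inE => /orP [] /eqP -> /=; apply: IH.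
Qed.

Lemma hW (w : seq S3) : all (fun s => s \in [:: Some true; Some false]) w -> h3 w = w.
Proof.
elim: w => //= s w IH /andP [hs hw]; rewrite IH //.
by move: hs; rewrite !inE => /orP [] /eqP ->.
Qed.

Theorem theorem4p2 :
  exists (S : finType) (L : language S) (h : seq S -> seq S),
    @monoid_hom S h /\ @RMM S L /\ ~ @RMM S (@lang_image S h L).
Proof.
exists S3, L3, h3; split; first by split => // u v; rewrite /h3 map_cat.
split.
  exists M3; split; first by move=> s; apply: perm_unitary.
  exists (1 / 2), (1 / 4); split; first by lra.
  move=> x; rewrite acc3 /L3; split => [->|hx]; first by rewrite eqxx; lra.
  by case: eqP => // _; lra.
move=> [M' [wf' hb]].
apply: (not_bounded wf' (a := Some true) (b := Some false) _ _ hb).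
- move=> w Ww; exists (rcons w None).
    by rewrite /L3 /run foldl_rcons -/(run w) runW.
  by rewrite /h3 map_rcons -/(h3 w) hW.
- move=> w [|d] Ww // _ [x Lx e].
  case/lastP: x Lx e => [|x s]; first by [].
  rewrite /L3 /run foldl_rcons -/(run x) => hs.
  have -> : s = None by case: s hs => // b; case: (run x) => [|[|k]].
  rewrite /h3 map_rcons nseqS_rcons -rcons_cons -rcons_cat => e.
  by have := congr1 (last None) e; rewrite !last_rcons.
Qed.
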